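(* Let $k>1$ be an integer and let $q\in(0,1)$ be a fixed constant. Then there exists $c>0$ such that for a random fan $\Sigma$ chosen with respect to $T(h,1-q)$, with high probability $\delta_k(\Sigma)>c$.
   Context: A ray is a half-line $\rho=\mathbb{R}_{\ge 0}v\subset\mathbb{R}^2$ with $v\in\mathbb{Z}^2\setminus\{0\}$; $u_\rho$ is its primitive lattice generator. On $\mathbb{Z}^2$ use the norm $|(x,y)|=\max\{|x|,|y|\}$, and $|\rho|=|u_\rho|$. The completion of a finite set $S$ of rays is the fan with ray set $S$ that is maximal under inclusion among fans with ray set $S$ (its $2$-dimensional cones are spanned by angularly consecutive rays of $S$ at angle less than $\pi$). $T(h,p)$ is the distribution on fans obtained by including each ray $\rho$ with $|\rho|\le h$ independently with probability $p$ and completing. The singularity index of a $2$-dimensional cone spanned by $\rho,\tau$ is $|\det(u_\rho,u_\tau)|$. The $2$-dimensional cones of $\Sigma$ correspond to the torus-fixed points of $X(\Sigma)$. Define $\delta_k(\Sigma)$ as the number of $2$-dimensional cones of $\Sigma$ of singularity index at least $k$ divided by the total number of $2$-dimensional cones of $\Sigma$. ''With high probability'' means with probability tending to $1$ as $h\to\infty$. *)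

(* Defs.v *)
From Stdlib Require Import Reals ZArith List.
Import ListNotations.
Open Scope R_scope.

(** A ray is represented by its primitive lattice generator u = (x,y) in Z^2,
    i.e. gcd(x,y) = 1 (this excludes (0,0)). *)
Definition vec := (Z * Z)%type.

Definition norm (u : vec) : Z := Z.max (Z.abs (fst u)) (Z.abs (snd u)).

Definition det (u v : vec) : Z := (fst u * snd v - snd u * fst v)%Z.

Definition primitive (u : vec) : bool := Z.eqb (Z.gcd (fst u) (snd u)) 1.

Definition zrange (h : nat) : list Z :=
  map (fun i => (Z.of_nat i - Z.of_nat h)%Z) (seq 0 (2 * h + 1)).

Definition rays_upto (h : nat) : list vec :=
  filter primitive (list_prod (zrange h) (zrange h)).

(** The 2-dimensional cones of the completion of the ray set S:
    pairs (u,v) of rays of S that are angularly consecutive (counterclockwise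
    from u to v, no ray of S strictly in between) at angle less than pi
    (i.e. det(u,v) > 0). *)
Definition is_cone (S : list vec) (uv : vec * vec) : bool :=
  let (u, v) := uv in
  Z.ltb 0 (det u v) &&
  forallb (fun w => negb (Z.ltb 0 (det u w) && Z.ltb 0 (det w v))) S.

Definition cones (S : list vec) : list (vec * vec) :=
  filter (is_cone S) (list_prod S S).

Definition sing_index (uv : vec * vec) : Z := Z.abs (det (fst uv) (snd uv)).

(** delta_k: proportion of 2-dim cones of singularity index >= k
    (convention: 0 if there are no 2-dimensional cones). *)
Definition delta (k : Z) (S : list vec) : R :=
  let C := cones S in
  match C with
  | [] => 0
  | _ => INR (length (filter (fun c => Z.leb k (sing_index c)) C))
         / INR (length C)
  end.

Fixpoint subsets {A : Type} (l : list A) : list (list A) :=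
  match l with
  | [] => [[]]
  | a :: t => let r := subsets t in map (cons a) r ++ r
  end.

Definition prob_incl (p : R) (l : list vec) (E : list vec -> bool) : R :=
  fold_right Rplus 0
    (map (fun S => p ^ length S * (1 - p) ^ (length l - length S)
                   * (if E S then 1 else 0)) (subsets l)).

(** Probability, under T(h,p), that the random fan satisfies P
    (the fan is the completion of the random ray set S). *)
Definition prob_T (h : nat) (p : R) (P : list vec -> bool) : R :=
  prob_incl p (rays_upto h) P.

Definition gtb (x y : R) : bool := if Rlt_dec y x then true else false.

(* Main.v *)
Require Import Defs.
From Stdlib Require Import Reals ZArith List.
From Stdlib Require Import Lia Lra Psatz Znumtheory.
Import ListNotations.
Open Scope R_scope.

Definition vec_eq_dec : forall a b : vec, {a = b} + {a <> b}.
Proof. decide equality; apply Z.eq_dec. Defined.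

Definition memb (a : vec) (S : list vec) : bool :=
  if in_dec vec_eq_dec a S then true else false.

Definition indb (b : bool) : R := if b then 1 else 0.

Definition rsum {A} (f : A -> R) (L : list A) : R :=
  fold_right (fun x acc => f x + acc) 0 L.

Definition Ex (p : R) (l : list vec) (f : list vec -> R) : R :=
  fold_right Rplus 0
    (map (fun S => p ^ length S * (1 - p) ^ (length l - length S) * f S) (subsets l)).

Lemma subsets_len {A} (l : list A) S : In S (subsets l) -> (length S <= length l)%nat.
Proof.
  revert S; induction l as [|a t IH]; simpl; intros S H.
  - destruct H as [<-|[]]; simpl; lia.
  - apply in_app_or in H; destruct H as [H|H].
    + apply in_map_iff in H; destruct H as [S' [<- H]]; simpl; apply IH in H; lia.
    + apply IH in H; lia.
Qed.

Lemma fr_app (L1 L2 : list R) :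
  fold_right Rplus 0 (L1 ++ L2) = fold_right Rplus 0 L1 + fold_right Rplus 0 L2.
Proof. induction L1; simpl; [ring| rewrite IHL1; ring]. Qed.

Lemma fr_map_ext {A} (F G : A -> R) L :
  (forall x, In x L -> F x = G x) ->
  fold_right Rplus 0 (map F L) = fold_right Rplus 0 (map G L).
Proof.
  induction L; simpl; intros H; auto.
  rewrite H by auto; rewrite IHL by auto; reflexivity.
Qed.

Lemma fr_map_scal {A} c (F : A -> R) L :
  fold_right Rplus 0 (map (fun x => c * F x) L) = c * fold_right Rplus 0 (map F L).
Proof. induction L; simpl; [ring| rewrite IHL; ring]. Qed.

Lemma Ex_nil p f : Ex p [] f = f [].
Proof. unfold Ex; simpl; ring. Qed.

Lemma Ex_cons p a t f :
  Ex p (a :: t) f = p * Ex p t (fun S => f (a :: S)) + (1 - p) * Ex p t f.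
Proof.
  unfold Ex; cbn [subsets]. rewrite map_app, fr_app, map_map.
  rewrite <- !fr_map_scal. f_equal.
  - apply fr_map_ext; intros S _; simpl. ring.
  - apply fr_map_ext; intros S0 HS. apply subsets_len in HS.
    cbn [length].
    replace (S (length t) - length S0)%nat with (S (length t - length S0))%nat by lia.
    simpl. ring.
Qed.

Lemma Ex_ext p l f g : (forall S, f S = g S) -> Ex p l f = Ex p l g.
Proof. intros H; unfold Ex; apply fr_map_ext; intros; rewrite H; auto. Qed.

Lemma Ex_const p l c : Ex p l (fun _ => c) = c.
Proof.
  induction l; [rewrite Ex_nil; auto|].
  rewrite Ex_cons, IHl; ring.
Qed.

Lemma Ex_plus p l f g : Ex p l (fun S => f S + g S) = Ex p l f + Ex p l g.
Proof.
  revert f g; induction l; intros f g; [rewrite !Ex_nil; auto|].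
  rewrite !Ex_cons, IHl, (IHl f g); ring.
Qed.

Lemma Ex_scal p l c f : Ex p l (fun S => c * f S) = c * Ex p l f.
Proof.
  revert f; induction l; intros f; [rewrite !Ex_nil; auto|].
  rewrite !Ex_cons, IHl, (IHl f); ring.
Qed.

Lemma Ex_minus p l f g : Ex p l (fun S => f S - g S) = Ex p l f - Ex p l g.
Proof.
  rewrite (Ex_ext p l _ (fun S => f S + (-1) * g S)) by (intros; ring).
  rewrite Ex_plus, Ex_scal; ring.
Qed.

Lemma Ex_rsum {A} p l (F : A -> list vec -> R) T :
  Ex p l (fun S => rsum (fun t => F t S) T) = rsum (fun t => Ex p l (F t)) T.
Proof.
  induction T; simpl.
  - apply Ex_const.
  - rewrite Ex_plus, IHT; reflexivity.
Qed.

Lemma subsets_cons {A} (a : A) t S : In S (subsets t) -> In (a :: S) (subsets (a :: t)).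
Proof. intros H; simpl; apply in_or_app; left; apply in_map; auto. Qed.
Lemma subsets_cons2 {A} (a : A) t S : In S (subsets t) -> In S (subsets (a :: t)).
Proof. intros H; simpl; apply in_or_app; right; auto. Qed.

Lemma Ex_mono p l f g : 0 <= p <= 1 ->
  (forall S, In S (subsets l) -> f S <= g S) -> Ex p l f <= Ex p l g.
Proof.
  intros Hp; revert f g; induction l; intros f g H.
  - rewrite !Ex_nil; apply H; simpl; auto.
  - rewrite !Ex_cons.
    assert (Ex p l (fun S => f (a :: S)) <= Ex p l (fun S => g (a :: S))).
    { apply IHl; intros; apply H, subsets_cons; auto. }
    assert (Ex p l f <= Ex p l g).
    { apply IHl; intros; apply H, subsets_cons2; auto. }
    nra.
Qed.

Definition dep (D : list vec) (f : list vec -> R) :=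
  forall S S', (forall x, In x D -> (In x S <-> In x S')) -> f S = f S'.

Lemma dep_cons_notin D f a : dep D f -> ~ In a D -> forall S, f (a :: S) = f S.
Proof.
  intros Hd Ha S; apply Hd; intros x Hx; simpl; split; intros H; auto.
  destruct H as [<-|H]; auto; contradiction.
Qed.

Lemma dep_cons D f a : dep D f -> dep D (fun S => f (a :: S)).
Proof.
  intros Hd S S' H; apply Hd; intros x Hx; simpl; specialize (H x Hx); tauto.
Qed.

Lemma Ex_indep p l f g D1 D2 : dep D1 f -> dep D2 g ->
  (forall x, In x D1 -> ~ In x D2) ->
  Ex p l (fun S => f S * g S) = Ex p l f * Ex p l g.
Proof.
  intros Hf Hg Hdis; revert f g Hf Hg; induction l as [|a t IH]; intros f g Hf Hg.
  - rewrite !Ex_nil; auto.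
  - rewrite !Ex_cons. destruct (in_dec vec_eq_dec a D1) as [Ha|Ha].
    + assert (Hga : forall S, g (a :: S) = g S)
        by (apply (dep_cons_notin D2); auto).
      rewrite (Ex_ext p t (fun S => f (a :: S) * g (a :: S)) (fun S => f (a :: S) * g S))
        by (intros; rewrite Hga; auto).
      rewrite (Ex_ext p t (fun S => g (a :: S)) g) by auto.
      rewrite (IH (fun S => f (a :: S)) g) by (auto; apply dep_cons; auto).
      rewrite (IH f g) by auto. ring.
    + assert (Hfa : forall S, f (a :: S) = f S)
        by (apply (dep_cons_notin D1); auto).
      rewrite (Ex_ext p t (fun S => f (a :: S) * g (a :: S)) (fun S => f S * g (a :: S)))
        by (intros; rewrite Hfa; auto).
      rewrite (Ex_ext p t (fun S => f (a :: S)) f) by auto.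
      rewrite (IH f (fun S => g (a :: S))) by (auto; apply dep_cons; auto).
      rewrite (IH f g) by auto. ring.
Qed.

Lemma memb_true a S : memb a S = true <-> In a S.
Proof. unfold memb; destruct in_dec; split; auto; discriminate. Qed.

Lemma dep_memb a : dep [a] (fun S => indb (memb a S)).
Proof.
  intros S S' H; specialize (H a (or_introl eq_refl)).
  unfold memb; destruct (in_dec vec_eq_dec a S), (in_dec vec_eq_dec a S'); tauto.
Qed.

Lemma Ex_memb_notin p l a : ~ In a l -> Ex p l (fun S => indb (memb a S)) = 0.
Proof.
  induction l as [|b t IH]; intros Ha.
  - rewrite Ex_nil; reflexivity.
  - rewrite Ex_cons.
    rewrite (Ex_ext p t (fun S => indb (memb a (b :: S))) (fun S => indb (memb a S))).
    + rewrite IH by (simpl in Ha; tauto); ring.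
    + intros S; apply (dep_cons_notin [a] (fun S => indb (memb a S)) b); [apply dep_memb|].
      simpl in *; intros [->|[]]; tauto.
Qed.

Lemma Ex_memb p l a : NoDup l -> In a l -> Ex p l (fun S => indb (memb a S)) = p.
Proof.
  induction l as [|b t IH]; intros Hnd Ha; [destruct Ha|].
  inversion Hnd; subst. rewrite Ex_cons.
  destruct (vec_eq_dec a b) as [->|Hab].
  - rewrite (Ex_ext p t (fun S => indb (memb b (b :: S))) (fun _ => 1)).
    + rewrite Ex_const, Ex_memb_notin by auto; ring.
    + intros S; unfold indb, memb; destruct in_dec; auto; simpl in n; tauto.
  - rewrite (Ex_ext p t (fun S => indb (memb a (b :: S))) (fun S => indb (memb a S))).
    + destruct Ha as [->|Ha]; [tauto|]. rewrite IH by auto; ring.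
    + intros S; apply (dep_cons_notin [a] (fun S => indb (memb a S)) b); [apply dep_memb|].
      simpl; intros [->|[]]; tauto.
Qed.
Open Scope Z_scope.

Lemma in_zrange h z : In z (zrange h) <-> - Z.of_nat h <= z <= Z.of_nat h.
Proof.
  unfold zrange; rewrite in_map_iff; split.
  - intros [i [<- Hi]]; apply in_seq in Hi; lia.
  - intros Hz; exists (Z.to_nat (z + Z.of_nat h)); split; [lia|].
    apply in_seq; lia.
Qed.

Lemma in_rays h z : In z (rays_upto h) <->
  (- Z.of_nat h <= fst z <= Z.of_nat h /\ - Z.of_nat h <= snd z <= Z.of_nat h
   /\ Z.gcd (fst z) (snd z) = 1).
Proof.
  unfold rays_upto; rewrite filter_In; destruct z as [x y]; cbn [fst snd].
  pose proof (in_prod_iff (zrange h) (zrange h) x y) as HH. rewrite !in_zrange in HH. unfold Defs.primitive; simpl. rewrite Z.eqb_eq. unfold vec. rewrite HH. tauto.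
Qed.

Lemma parallel_eq (u a b : vec) :
  Z.gcd (fst a) (snd a) = 1 -> Z.gcd (fst b) (snd b) = 1 ->
  det a b = 0 -> 0 < det u a -> 0 < det u b -> a = b.
Proof.
  destruct u as [ux uy], a as [ax ay], b as [bx by0]; unfold det; simpl.
  intros Ha Hb Hd H1 H2.
  pose proof (Zis_gcd_bezout _ _ _ (Zgcd_is_gcd ax ay)) as Hz.
  rewrite Ha in Hz; destruct Hz as [s t Hst].
  set (l := s * bx + t * by0).
  assert (Hd' : ax * by0 = ay * bx) by lia.
  assert (Ex : bx = l * ax).
  { unfold l. transitivity (bx * (s * ax + t * ay)); [rewrite Hst; ring|].
    replace ((s * bx + t * by0) * ax) with (s * bx * ax + t * (ax * by0)) by ring.
    rewrite Hd'; ring. }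
  assert (Ey : by0 = l * ay).
  { unfold l. transitivity (by0 * (s * ax + t * ay)); [rewrite Hst; ring|].
    replace ((s * bx + t * by0) * ay) with (s * (ay * bx) + t * by0 * ay) by ring.
    rewrite <- Hd'; ring. }
  rewrite Ex, Ey, Z.gcd_mul_mono_l, Ha in Hb.
  assert (l > 0).
  { rewrite Ex, Ey in H2. nia. }
  assert (l = 1) by lia.
  rewrite Ex, Ey, H0; f_equal; ring.
Qed.

Definition good (h : nat) (k : Z) (t : vec * vec * vec) : Prop :=
  let '(u, w, v) := t in
  In u (rays_upto h) /\ In w (rays_upto h) /\ In v (rays_upto h) /\
  det u w = 1 /\ det w v = 1 /\ 1 <= fst w /\ 2 * k * fst w <= Z.of_nat h /\
  Z.of_nat h < fst u + fst w /\ Z.of_nat h < fst v + fst w /\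
  0 <= fst u /\ 0 <= fst v /\ 2 <= k.

Lemma empty_cone h k u w v z : good h k (u, w, v) -> In z (rays_upto h) ->
  0 < det u z -> 0 < det z v -> z = w.
Proof.
  intros (Hu & Hw & Hv & Huw & Hwv & Hw1 & Hwh & Hu2 & Hv2 & Hu0 & Hv0 & Hk) Hz H1 H2.
  pose proof Hz as Hz'.
  apply in_rays in Hz; apply in_rays in Hw.
  destruct u as [ux uy], w as [wx wy], v as [vx vy], z as [zx zy].
  unfold det in *; simpl in *.
  set (a := zx * wy - zy * wx) in *.
  set (e := wx * zy - wy * zx) in *.
  assert (Ix : zx = a * ux + (ux * zy - uy * zx) * wx).
  { unfold a. transitivity (zx * (ux * wy - uy * wx)); [rewrite Huw; ring| ring]. }
  assert (Jx : zx = (zx * vy - zy * vx) * wx + e * vx).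
  { unfold e. transitivity (zx * (wx * vy - wy * vx)); [rewrite Hwv; ring| ring]. }
  assert (a <= 0).
  { destruct (Z_le_gt_dec a 0); auto. exfalso. nia. }
  assert (e <= 0).
  { destruct (Z_le_gt_dec e 0); auto. exfalso. nia. }
  assert (Hdet : det (wx, wy) (zx, zy) = 0) by (unfold det, e, a in *; simpl; lia).
  apply (parallel_eq (ux, uy)); simpl; try tauto; unfold det; simpl; lia.
Qed.

Lemma det_uv_ge h k u w v : good h k (u, w, v) -> k <= det u v.
Proof.
  intros (Hu & Hw & Hv & Huw & Hwv & Hw1 & Hwh & Hu2 & Hv2 & Hu0 & Hv0 & Hk).
  destruct u as [ux uy], w as [wx wy], v as [vx vy]; unfold det in *; cbn [fst snd] in *.
  set (c := ux * vy - uy * vx).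
  assert (Ix : vx = - ux + c * wx).
  { unfold c. transitivity (vx * (ux * wy - uy * wx)); [rewrite Huw; ring|].
    transitivity (- ux * (wx * vy - wy * vx) + (ux * vy - uy * vx) * wx); [ring|].
    rewrite Hwv; ring. }
  assert (H0 : c * wx = vx + ux) by lia.
  assert (H1 : (c - (4 * k - 2)) * wx > 0).
  { rewrite Z.mul_sub_distr_r, H0. replace ((4 * k - 2) * wx) with (2 * (2 * k * wx) - 2 * wx) by ring. lia. }
  destruct (Z_le_gt_dec c (4 * k - 2)); [|lia].
  assert ((c - (4 * k - 2)) * wx <= 0); [|lia].
  apply Z.mul_nonpos_nonneg; lia.
Qed.

Lemma cone_of_good h k u w v S : good h k (u, w, v) -> incl S (rays_upto h) ->
  In u S -> In v S -> ~ In w S ->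
  In (u, v) (cones S) /\ k <= sing_index (u, v).
Proof.
  intros Hg HS Hu Hv Hw.
  pose proof (det_uv_ge _ _ _ _ _ Hg) as Hd.
  assert (Hk : 2 <= k) by (destruct Hg as (_&_&_&_&_&_&_&_&_&_&_&H); exact H).
  split.
  - unfold cones; apply filter_In; split.
    + apply in_prod; auto.
    + unfold is_cone. apply andb_true_intro; split.
      * apply Z.ltb_lt; lia.
      * apply forallb_forall; intros z Hz.
        destruct (Z.ltb_spec 0 (det u z)), (Z.ltb_spec 0 (det z v)); simpl; auto.
        exfalso. assert (z = w) by (eapply empty_cone; eauto). subst; auto.
  - unfold sing_index; simpl; lia.
Qed.

Lemma cones_fst_unique h S u v v' : incl S (rays_upto h) ->
  In (u, v) (cones S) -> In (u, v') (cones S) -> v = v'.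
Proof.
  intros HS H1 H2; unfold cones in *; apply filter_In in H1, H2.
  destruct H1 as [P1 C1], H2 as [P2 C2].
  apply in_prod_iff in P1, P2.
  unfold is_cone in C1, C2; apply andb_prop in C1, C2.
  destruct C1 as [D1 F1], C2 as [D2 F2]; apply Z.ltb_lt in D1, D2.
  rewrite forallb_forall in F1, F2.
  destruct (Z.lt_trichotomy (det v v') 0) as [Hlt|[Heq|Hgt]].
  - specialize (F1 v' (proj2 P2)).
    assert (det v' v > 0) by (unfold det in *; lia).
    destruct (Z.ltb_spec 0 (det u v')), (Z.ltb_spec 0 (det v' v)); simpl in F1; try discriminate; lia.
  - assert (G1 := HS _ (proj2 P1)); apply in_rays in G1 as [_ [_ G1]].
    assert (G2 := HS _ (proj2 P2)); apply in_rays in G2 as [_ [_ G2]].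
    apply (parallel_eq u); auto.
  - specialize (F2 v (proj2 P1)).
    destruct (Z.ltb_spec 0 (det u v)), (Z.ltb_spec 0 (det v v')); simpl in F2; try discriminate; lia.
Qed.

Lemma decomp (a b z : vec) : det a b = 1 ->
  fst z = det z b * fst a + det a z * fst b /\ snd z = det z b * snd a + det a z * snd b.
Proof.
  destruct a as [ax ay], b as [bx by0], z as [zx zy]; unfold det; cbn [fst snd]; intros H.
  split.
  - transitivity (zx * (ax * by0 - ay * bx)); [rewrite H; ring| ring].
  - transitivity (zy * (ax * by0 - ay * bx)); [rewrite H; ring| ring].
Qed.

Lemma xbounds h k u w v : good h k (u, w, v) ->
  1 <= fst w /\ 4 * fst w <= Z.of_nat h /\ 4 * fst u > 3 * Z.of_nat h /\
  4 * fst v > 3 * Z.of_nat h /\ det u w = 1 /\ det w v = 1.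
Proof.
  intros (Hu & Hw & Hv & Huw & Hwv & Hw1 & Hwh & Hu2 & Hv2 & Hu0 & Hv0 & Hk).
  assert (4 * fst w <= 2 * k * fst w) by nia.
  repeat split; lia.
Qed.

Lemma triple_distinct h k u w v : good h k (u, w, v) -> u <> w /\ w <> v /\ u <> v.
Proof.
  intros Hg; destruct (xbounds _ _ _ _ _ Hg) as (_&_&_&_&H1&H2).
  repeat split; intros ->.
  - destruct w; unfold det in H1; simpl in H1; lia.
  - destruct v; unfold det in H2; simpl in H2; lia.
  - destruct v, w; unfold det in *; simpl in *; lia.
Qed.

Lemma disjoint h k u w v u' w' v' : good h k (u, w, v) -> good h k (u', w', v') ->
  w <> w' -> forall x, In x [u; w; v] -> ~ In x [u'; w'; v'].
Proof.
  intros G G' Hne x Hx Hx'.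
  destruct (xbounds _ _ _ _ _ G) as (A1&A2&A3&A4&A5&A6).
  destruct (xbounds _ _ _ _ _ G') as (B1&B2&B3&B4&B5&B6).
  simpl in Hx, Hx'.
  destruct Hx as [<-|[<-|[<-|[]]]]; destruct Hx' as [E|[E|[E|[]]]].
  - subst u'.
    destruct (decomp _ _ w' A5) as [Dx Dy]. rewrite B5 in Dx, Dy.
    destruct (Z.lt_trichotomy (det w' w) 0) as [L|[L|L]].
    + nia.
    + rewrite L in Dx, Dy. apply Hne. destruct w, w'; cbn [fst snd] in *; f_equal; lia.
    + nia.
  - subst w'. lia.
  - subst v'.
    destruct (decomp _ _ w' A5) as [Dx Dy].
    assert (det u w' = -1) by (unfold det in *; lia). rewrite H in Dx.
    destruct (Z_le_gt_dec (det w' w) 0); nia.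
  - subst u'. lia.
  - apply Hne; auto.
  - subst v'. lia.
  - subst u'.
    destruct (decomp _ _ w' A6) as [Dx Dy].
    assert (det w' v = -1) by (unfold det in *; lia). rewrite H in Dx.
    destruct (Z_le_gt_dec (det w w') 0); nia.
  - subst w'. lia.
  - subst v'.
    destruct (decomp _ _ w' A6) as [Dx Dy]. rewrite B6 in Dx, Dy.
    destruct (Z.lt_trichotomy (det w w') 0) as [L|[L|L]].
    + nia.
    + rewrite L in Dx, Dy. apply Hne. destruct w, w'; cbn [fst snd] in *; f_equal; lia.
    + nia.
Qed.

Lemma triple_exists h k wx wy : 2 <= k -> 1 <= wy < wx -> Z.gcd wx wy = 1 ->
  2 * k * wx <= Z.of_nat h -> exists u v, good h k (u, (wx, wy), v).
Proof.
  intros Hk Hw Hg Hh.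
  set (hz := Z.of_nat h) in *.
  assert (H4 : 4 * wx <= hz) by nia.
  pose proof (Zis_gcd_bezout _ _ _ (Zgcd_is_gcd wx wy)) as Hb.
  rewrite Hg in Hb; destruct Hb as [s t Hst].
  assert (Hwx : wx <> 0) by lia.
  set (j := (hz - t) / wx). set (r := (hz - t) mod wx).
  pose proof (Z.div_mod (hz - t) wx Hwx) as Hd1. fold j r in Hd1.
  pose proof (Z.mod_pos_bound (hz - t) wx ltac:(lia)) as Hr. fold r in Hr.
  set (j' := (hz + t) / wx). set (r' := (hz + t) mod wx).
  pose proof (Z.div_mod (hz + t) wx Hwx) as Hd2. fold j' r' in Hd2.
  pose proof (Z.mod_pos_bound (hz + t) wx ltac:(lia)) as Hr'. fold r' in Hr'.
  set (ux := t + j * wx). set (uy := - s + j * wy).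
  set (vx := - t + j' * wx). set (vy := s + j' * wy).
  assert (Eux : ux = hz - r) by (unfold ux; lia).
  assert (Evx : vx = hz - r') by (unfold vx; lia).
  assert (Duw : ux * wy - uy * wx = 1) by (unfold ux, uy; rewrite <- Hst; ring).
  assert (Dwv : wx * vy - wy * vx = 1) by (unfold vx, vy; rewrite <- Hst; ring).
  clearbody ux uy vx vy.
  assert (Uy : uy * wx = ux * wy - 1) by lia.
  assert (Vy : vy * wx = vx * wy + 1) by lia.
  assert (0 <= uy).
  { destruct (Z_le_gt_dec 0 uy); auto. nia. }
  assert (uy <= ux).
  { destruct (Z_le_gt_dec uy ux); auto. nia. }
  assert (0 <= vy).
  { destruct (Z_le_gt_dec 0 vy); auto. nia. }
  assert (vy <= vx).
  { destruct (Z_le_gt_dec vy vx); auto. nia. }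
  exists (ux, uy), (vx, vy). unfold good; cbn [fst snd].
  repeat split; try (unfold det; cbn [fst snd]; lia); try lia.
  - apply in_rays; cbn [fst snd]; repeat split; try lia.
    apply Z.bezout_1_gcd. exists wy, (- wx). lia.
  - apply in_rays; cbn [fst snd]; repeat split; try lia.
  - apply in_rays; cbn [fst snd]; repeat split; try lia.
    apply Z.bezout_1_gcd. exists (- wy), wx. lia.
Qed.
Close Scope Z_scope.
Open Scope R_scope.

Lemma NoDup_map_on {X Y} (f : X -> Y) L : NoDup L ->
  (forall x y, In x L -> In y L -> f x = f y -> x = y) -> NoDup (map f L).
Proof.
  induction L as [|a L IH]; simpl; intros Hn Hi; constructor.
  - inversion Hn; subst. intros Hin. apply in_map_iff in Hin as [y [Hy Hy']].
    assert (y = a) by (apply Hi; auto). subst; tauto.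
  - inversion Hn; subst. apply IH; auto.
Qed.

Lemma NoDup_prod {X Y} (l1 : list X) (l2 : list Y) :
  NoDup l1 -> NoDup l2 -> NoDup (list_prod l1 l2).
Proof.
  induction l1 as [|a l IH]; simpl; intros H1 H2; [constructor|].
  inversion H1; subst. apply NoDup_app.
  - apply NoDup_map_on; auto. intros x y _ _ E; inversion E; auto.
  - apply IH; auto.
  - intros [x y] Hx Hy. apply in_map_iff in Hx as [z [E _]]. inversion E; subst.
    apply in_prod_iff in Hy. tauto.
Qed.

Lemma rsum_ind {X} (f : X -> bool) L :
  rsum (fun x => indb (f x)) L = INR (length (filter f L)).
Proof.
  induction L; simpl; [auto|]. rewrite IHL; unfold indb; destruct (f a); cbn [length];
  [rewrite S_INR|]; ring.
Qed.

Lemma rsum_ext {X} (f g : X -> R) L : (forall x, In x L -> f x = g x) -> rsum f L = rsum g L.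
Proof. induction L; simpl; intros H; auto. rewrite H, IHL; auto. Qed.

Lemma rsum_plus {X} (f g : X -> R) L : rsum (fun x => f x + g x) L = rsum f L + rsum g L.
Proof. induction L; simpl; [ring|rewrite IHL; ring]. Qed.

Lemma rsum_scal {X} (f : X -> R) c L : rsum (fun x => f x * c) L = rsum f L * c.
Proof. induction L; simpl; [ring|rewrite IHL; ring]. Qed.

Lemma rsum_nonneg {X} (f : X -> R) L : (forall x, In x L -> 0 <= f x) -> 0 <= rsum f L.
Proof. induction L; simpl; intros H; [lra|]. specialize (IHL (fun x Hx => H x (or_intror Hx))).
  specialize (H a (or_introl eq_refl)). lra. Qed.

Lemma rsum_le {X} (f g : X -> R) L : (forall x, In x L -> f x <= g x) -> rsum f L <= rsum g L.
Proof. induction L; simpl; intros H; [lra|]. specialize (IHL (fun x Hx => H x (or_intror Hx))).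
  specialize (H a (or_introl eq_refl)). lra. Qed.

Lemma rsum_ge_term {X} (f : X -> R) L a : (forall x, In x L -> 0 <= f x) -> In a L -> f a <= rsum f L.
Proof.
  induction L; simpl; intros H Ha; [destruct Ha|].
  destruct Ha as [->|Ha].
  - assert (0 <= rsum f L) by (apply rsum_nonneg; auto). lra.
  - specialize (IHL (fun x Hx => H x (or_intror Hx)) Ha). specialize (H a0 (or_introl eq_refl)). lra.
Qed.

Lemma indb_nonneg b : 0 <= indb b.
Proof. unfold indb; destruct b; lra. Qed.

Lemma union_bound {X Dt} (Q : X -> bool) (Rl : Dt -> X -> bool) L Ds :
  (forall x, In x L -> Q x = true -> exists d, In d Ds /\ Rl d x = true) ->
  rsum (fun x => indb (Q x)) L <= rsum (fun d => rsum (fun x => indb (Rl d x)) L) Ds.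
Proof.
  induction L as [|a L IH]; simpl; intros H.
  - rewrite (rsum_ext _ (fun _ => 0 * 0)).
    + rewrite rsum_scal, Rmult_0_r; lra.
    + intros; simpl; ring.
  - rewrite rsum_plus.
    assert (indb (Q a) <= rsum (fun d => indb (Rl d a)) Ds).
    { destruct (Q a) eqn:Eq.
      - destruct (H a (or_introl eq_refl) Eq) as [d [Hd Hr]].
        assert (Hge := rsum_ge_term (fun d => indb (Rl d a)) Ds d (fun x _ => indb_nonneg _) Hd).
        simpl in Hge; rewrite Hr in Hge; unfold indb in *; lra.
      - unfold indb at 1. apply rsum_nonneg; intros; apply indb_nonneg. }
    specialize (IH (fun x Hx => H x (or_intror Hx))). lra.
Qed.

Lemma rsum_app {X} (f : X -> R) L1 L2 : rsum f (L1 ++ L2) = rsum f L1 + rsum f L2.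
Proof. induction L1; simpl; [ring|rewrite IHL1; ring]. Qed.

Lemma rsum_map {X Y} (f : Y -> R) (g : X -> Y) L : rsum f (map g L) = rsum (fun x => f (g x)) L.
Proof. induction L; simpl; [auto|rewrite IHL; auto]. Qed.

Lemma rsum_prod {X Y} (F : X * Y -> R) A Bl :
  rsum F (list_prod A Bl) = rsum (fun a => rsum (fun b => F (a, b)) Bl) A.
Proof. induction A; simpl; [auto|]. rewrite rsum_app, rsum_map, IHA; auto. Qed.

Definition zl (M : nat) : list Z := map Z.of_nat (seq 1 M).
Definition PL (M : nat) := list_prod (zl M) (zl M).
Definition cop (p : Z * Z) : bool := Z.eqb (Z.gcd (fst p) (snd p)) 1.
Definition dvb (d x : Z) : bool := Z.eqb (x mod d) 0.

Lemma in_zl M x : In x (zl M) <-> (1 <= x <= Z.of_nat M)%Z.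
Proof.
  unfold zl; rewrite in_map_iff; split.
  - intros [i [<- Hi]]; apply in_seq in Hi; lia.
  - intros H; exists (Z.to_nat x); split; [lia|]; apply in_seq; lia.
Qed.

Lemma count_mult M d : (1 <= d)%Z ->
  INR (length (filter (dvb d) (zl M))) * IZR d <= INR M.
Proof.
  intros Hd.
  set (q := (Z.of_nat M / d)%Z).
  assert (Hl : (length (filter (dvb d) (zl M)) <= Z.to_nat q)%nat).
  { replace (Z.to_nat q) with (length (map (fun j => d * j)%Z (zl (Z.to_nat q))))
      by (unfold zl; rewrite !length_map, length_seq; auto).
    apply NoDup_incl_length.
    - apply NoDup_filter. unfold zl; apply NoDup_map_on; [apply seq_NoDup|]. intros; lia.
    - intros x Hx. apply filter_In in Hx as [Hx Hm]. apply in_zl in Hx.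
      unfold dvb in Hm; apply Z.eqb_eq in Hm.
      apply in_map_iff. exists (x / d)%Z. split.
      + symmetry; apply Z.div_exact; lia.
      + apply in_zl. pose proof (proj2 (Z.div_exact x d ltac:(lia)) Hm).
        assert (0 < x / d)%Z by nia.
        assert (x / d <= q)%Z by (apply Z.div_le_mono; lia). lia. }
  assert (Hq : (d * q <= Z.of_nat M)%Z) by (apply Z.mul_div_le; lia).
  assert (0 <= q)%Z by (apply Z.div_pos; lia).
  apply le_INR in Hl. rewrite !INR_IZR_INZ in Hl. rewrite !INR_IZR_INZ.
  rewrite Z2Nat.id in Hl by lia.
  apply IZR_le in Hq. rewrite mult_IZR in Hq.
  assert (0 < IZR d) by (apply IZR_lt; lia). nra.
Qed.

Lemma sum_inv_sq a n : (2 <= a)%nat ->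
  rsum (fun m => 1 / (INR m * INR m)) (seq a n) <= 1 / (INR a - 1) - 1 / (INR (a + n) - 1).
Proof.
  revert a; induction n; intros a Ha; simpl.
  - rewrite Nat.add_0_r; lra.
  - specialize (IHn (S a) ltac:(lia)). rewrite Nat.add_succ_l, !S_INR in IHn. assert (2 <= INR a) by (apply (le_INR 2); lia).
    assert (1 / (INR a * INR a) <= 1 / (INR a - 1) - 1 / (INR a + 1 - 1)).
    { assert (E: 1/(INR a - 1) - 1/(INR a + 1 - 1) - 1/(INR a * INR a)
                = 1/(INR a * INR a * (INR a - 1))) by (field; lra).
      assert (0 < 1/(INR a * INR a * (INR a - 1))) by (apply Rdiv_lt_0_compat; nra).
      lra. }
    rewrite Nat.add_succ_r, S_INR. lra.
Qed.

Lemma rsum_one {X} (L : list X) : rsum (fun _ => 1) L = INR (length L).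
Proof. induction L; cbn [rsum fold_right length]; [auto|]. unfold rsum in *; rewrite IHL, S_INR; ring. Qed.

Definition dv2 (d : Z) (p : Z * Z) : bool := dvb d (fst p) && dvb d (snd p).

Lemma count_dv2 M d : (1 <= d)%Z ->
  rsum (fun x => indb (dv2 d x)) (PL M) <= INR M * INR M * (1 / (IZR d * IZR d)).
Proof.
  intros Hd. unfold PL. rewrite rsum_prod.
  rewrite (rsum_ext _ (fun a => indb (dvb d a) * rsum (fun b => indb (dvb d b)) (zl M))).
  2:{ intros a _. rewrite Rmult_comm, <- rsum_scal. apply rsum_ext; intros b _.
      unfold dv2, indb; cbn [fst snd]; destruct (dvb d a), (dvb d b); simpl; ring. }
  rewrite rsum_scal, !rsum_ind.
  pose proof (count_mult M d Hd) as Hc.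
  set (c := INR (length (filter (dvb d) (zl M)))) in *.
  assert (0 <= c) by apply pos_INR.
  assert (1 <= IZR d) by (apply IZR_le; lia).
  assert (c <= INR M / IZR d) by (apply Rmult_le_reg_r with (IZR d); [lra|]; field_simplify; lra).
  assert (0 <= INR M / IZR d) by lra.
  replace (INR M * INR M * (1 / (IZR d * IZR d))) with ((INR M / IZR d) * (INR M / IZR d)) by (field; lra).
  nra.
Qed.

Lemma coprime_count M : INR M * INR M <= 4 * INR (length (filter cop (PL M))).
Proof.
  rewrite <- rsum_ind.
  assert (Htot : rsum (fun x => indb (cop x)) (PL M) + rsum (fun x => indb (negb (cop x))) (PL M)
                 = INR M * INR M).
  { rewrite <- rsum_plus. rewrite (rsum_ext _ (fun _ => 1)).
    - rewrite rsum_one. unfold PL, zl. rewrite length_prod, length_map, length_seq, mult_INR; auto.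
    - intros x _; unfold indb; destruct (cop x); simpl; ring. }
  destruct M as [|M'].
  - simpl in *. assert (0 <= rsum (fun x => indb (cop x)) (PL 0)) by (apply rsum_nonneg; intros; apply indb_nonneg). lra.
  - set (M := S M') in *.
    assert (Hub : rsum (fun x => indb (negb (cop x))) (PL M) <=
             rsum (fun d => rsum (fun x => indb (dv2 d x)) (PL M)) (map Z.of_nat (seq 2 M))).
    { apply union_bound. intros [x y] Hxy Hn.
      unfold PL in Hxy; apply in_prod_iff in Hxy as [Hx Hy]; apply in_zl in Hx, Hy.
      unfold cop in Hn; cbn [fst snd] in Hn; apply Bool.negb_true_iff, Z.eqb_neq in Hn.
      set (g := Z.gcd x y) in *.
      assert (g <> 0%Z) by (unfold g; rewrite Z.gcd_eq_0; lia).
      assert (0 <= g)%Z by apply Z.gcd_nonneg.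
      assert (g <= x)%Z by (apply Z.divide_pos_le; [lia| apply Z.gcd_divide_l]).
      exists g; split.
      - apply in_map_iff; exists (Z.to_nat g); split; [lia|]. apply in_seq; lia.
      - unfold dv2, dvb; cbn [fst snd]. apply andb_true_intro; split; apply Z.eqb_eq, Z.mod_divide; auto.
        + apply Z.gcd_divide_l.
        + apply Z.gcd_divide_r. }
    assert (Hb : rsum (fun d => rsum (fun x => indb (dv2 d x)) (PL M)) (map Z.of_nat (seq 2 M))
                 <= rsum (fun m => INR M * INR M * (1 / (INR m * INR m))) (seq 2 M)).
    { rewrite rsum_map. apply rsum_le. intros m Hm. apply in_seq in Hm.
      rewrite (INR_IZR_INZ m). apply count_dv2. lia. }
    assert (Hs : rsum (fun m => INR M * INR M * (1 / (INR m * INR m))) (seq 2 M) <= INR M * INR M * (3/4)).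
    { unfold M; cbn [seq]. unfold rsum; cbn [fold_right]; fold (rsum (fun m => INR (S M') * INR (S M') * (1 / (INR m * INR m))) (seq 3 M')).
      rewrite (rsum_ext _ (fun m => (1 / (INR m * INR m)) * (INR (S M') * INR (S M')))) by (intros; ring).
      rewrite rsum_scal.
      pose proof (sum_inv_sq 3 M' ltac:(lia)) as Hq.
      assert (0 <= 1 / (INR (3 + M') - 1)).
      { apply Rlt_le, Rdiv_lt_0_compat; [lra|]. rewrite plus_INR; simpl; pose proof (pos_INR M'); lra. }
      replace (INR 3) with 3 in Hq by (simpl; ring).
      replace (INR 2) with 2 by (simpl; ring).
      assert (0 <= INR (S M') * INR (S M')) by (apply Rmult_le_pos; apply pos_INR).
      nra. }
    lra.
Qed.

Definition Fam (M : nat) : list vec :=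
  map (fun p => (fst p + snd p, snd p)%Z) (filter cop (PL M)).

Lemma Fam_len M : length (Fam M) = length (filter cop (PL M)).
Proof. unfold Fam; apply length_map. Qed.

Lemma NoDup_zl M : NoDup (zl M).
Proof. unfold zl; apply NoDup_map_on; [apply seq_NoDup| intros; lia]. Qed.

Lemma Fam_NoDup M : NoDup (Fam M).
Proof.
  unfold Fam; apply NoDup_map_on.
  - apply NoDup_filter; unfold PL; apply NoDup_prod; apply NoDup_zl.
  - intros [a b] [c d] _ _ E; cbn [fst snd] in E; inversion E; f_equal; lia.
Qed.

Lemma Fam_in M w : In w (Fam M) ->
  (1 <= snd w < fst w)%Z /\ (fst w <= 2 * Z.of_nat M)%Z /\ Z.gcd (fst w) (snd w) = 1%Z.
Proof.
  unfold Fam; intros H; apply in_map_iff in H as [[x y] [<- H]].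
  apply filter_In in H as [H Hc]. unfold PL in H; apply in_prod_iff in H as [Hx Hy].
  apply in_zl in Hx, Hy. unfold cop in Hc; cbn [fst snd] in *. apply Z.eqb_eq in Hc.
  repeat split; try lia.
  rewrite Z.gcd_comm, Z.gcd_add_diag_r, Z.gcd_comm; auto.
Qed.

Definition mid (t : vec * vec * vec) : vec := let '(u, w, v) := t in w.

Lemma build (h : nat) (k : Z) L :
  (forall w, In w L -> exists u v, good h k (u, w, v)) ->
  exists T, map mid T = L /\ forall t, In t T -> good h k t.
Proof.
  induction L as [|w L IH]; intros H.
  - exists []; simpl; split; auto; tauto.
  - destruct (H w (or_introl eq_refl)) as [u [v G]].
    destruct IH as [T [E HT]]; [intros; apply H; simpl; auto|].
    exists ((u, w, v) :: T); simpl; split; [rewrite E; auto|].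
    intros t [<-|Ht]; auto.
Qed.

Lemma NoDup_map_eq {X Y} (f : X -> Y) L x y : NoDup (map f L) -> In x L -> In y L -> f x = f y -> x = y.
Proof.
  induction L as [|a L IH]; simpl; intros Hn Hx Hy E; [destruct Hx|].
  inversion Hn; subst.
  destruct Hx as [<-|Hx], Hy as [<-|Hy]; auto.
  - exfalso; apply H1; rewrite E; apply in_map; auto.
  - exfalso; apply H1; rewrite <- E; apply in_map; auto.
Qed.

Lemma subsets_props {X} (l : list X) S : In S (subsets l) -> incl S l /\ (NoDup l -> NoDup S).
Proof.
  revert S; induction l as [|a t IH]; simpl; intros S H.
  - destruct H as [<-|[]]; split; [intros x []|constructor].
  - apply in_app_or in H; destruct H as [H|H].
    + apply in_map_iff in H as [S' [<- H]]. apply IH in H as [H1 H2]. split.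
      * intros x [<-|Hx]; simpl; auto.
      * intros Hn; inversion Hn; subst; constructor; auto.
    + apply IH in H as [H1 H2]. split.
      * intros x Hx; simpl; auto.
      * intros Hn; inversion Hn; auto.
Qed.

Lemma NoDup_zrange h : NoDup (zrange h).
Proof. unfold zrange; apply NoDup_map_on; [apply seq_NoDup| intros; lia]. Qed.

Lemma NoDup_rays h : NoDup (rays_upto h).
Proof. unfold rays_upto; apply NoDup_filter, NoDup_prod; apply NoDup_zrange. Qed.

Lemma rays_len h : (length (rays_upto h) <= (2 * h + 1) * (2 * h + 1))%nat.
Proof.
  unfold rays_upto. eapply Nat.le_trans; [apply filter_length_le|].
  pose proof (length_prod (zrange h) (zrange h)) as E. unfold zrange in *. rewrite length_map, length_seq in E. unfold vec. rewrite E. lia.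
Qed.

Lemma cones_len h S : NoDup S -> incl S (rays_upto h) -> (length (cones S) <= length S)%nat.
Proof.
  intros Hn Hi. rewrite <- (length_map fst).
  apply NoDup_incl_length.
  - apply NoDup_map_on.
    + unfold cones; apply NoDup_filter, NoDup_prod; auto.
    + intros [a b] [c d] H1 H2 E; cbn [fst] in E; subst c.
      f_equal; eapply cones_fst_unique; eauto.
  - intros x Hx; apply in_map_iff in Hx as [[a b] [<- Hx]].
    unfold cones in Hx; apply filter_In in Hx as [Hx _]; apply in_prod_iff in Hx; simpl; tauto.
Qed.

Definition ev (t : vec * vec * vec) (S : list vec) : bool :=
  let '(u, w, v) := t in memb u S && memb v S && negb (memb w S).

Lemma count_sing h k T S : NoDup (map mid T) -> (forall t, In t T -> good h k t) ->
  incl S (rays_upto h) ->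
  (length (filter (fun t => ev t S) T) <=
   length (filter (fun c => Z.leb k (sing_index c)) (cones S)))%nat.
Proof.
  intros Hn HT HS.
  set (uv := fun t : vec * vec * vec => let '(u, w, v) := t in (u, v)).
  rewrite <- (length_map uv). apply NoDup_incl_length.
  - apply NoDup_map_on.
    + apply NoDup_filter. eapply NoDup_map_inv; eauto.
    + intros [[u w] v] [[u' w'] v'] H1 H2 E. apply filter_In in H1 as [H1 _], H2 as [H2 _].
      simpl in E; inversion E; subst u' v'.
      destruct (vec_eq_dec w w') as [<-|Hne].
      * eapply NoDup_map_eq; eauto.
      * exfalso. eapply (disjoint h k u w v u w' v); eauto; simpl; auto.
  - intros x Hx. apply in_map_iff in Hx as [[[u w] v] [<- Hx]].
    apply filter_In in Hx as [Hx Hev]. simpl in Hev.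
    apply andb_prop in Hev as [Hev Hw]. apply andb_prop in Hev as [Hu Hv].
    apply memb_true in Hu, Hv. apply Bool.negb_true_iff in Hw.
    assert (~ In w S) by (intros Hin; apply memb_true in Hin; congruence).
    destruct (cone_of_good h k u w v S) as [C1 C2]; auto.
    apply filter_In; split; auto. apply Z.leb_le; auto.
Qed.

Lemma dep_mono D D' f : dep D f -> incl D D' -> dep D' f.
Proof. intros H Hi S S' E; apply H; intros x Hx; apply E, Hi; auto. Qed.

Lemma dep_mul D f g : dep D f -> dep D g -> dep D (fun S => f S * g S).
Proof. intros Hf Hg S S' E; rewrite (Hf S S'), (Hg S S'); auto. Qed.

Lemma dep_affine D f a b : dep D f -> dep D (fun S => a * f S + b).
Proof. intros Hf S S' E; rewrite (Hf S S'); auto. Qed.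

Lemma indb_ev t S : indb (ev t S) =
  let '(u, w, v) := t in
  (indb (memb u S) * indb (memb v S)) * ((-1) * indb (memb w S) + 1).
Proof.
  destruct t as [[u w] v]; simpl; unfold indb.
  destruct (memb u S), (memb v S), (memb w S); simpl; ring.
Qed.

Lemma dep_ev t : dep (let '(u, w, v) := t in [u; w; v]) (fun S => indb (ev t S)).
Proof.
  destruct t as [[u w] v].
  intros S S' E. rewrite !indb_ev.
  assert (Hm : forall a, In a [u; w; v] -> indb (memb a S) = indb (memb a S')).
  { intros a Ha; apply dep_memb; intros x [<-|[]]; auto. }
  rewrite (Hm u), (Hm v), (Hm w); simpl; auto.
Qed.

Lemma Ex_ev p h k t : good h k t ->
  Ex p (rays_upto h) (fun S => indb (ev t S)) = p * p * (1 - p).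
Proof.
  destruct t as [[u w] v]; intros G.
  pose proof (triple_distinct _ _ _ _ _ G) as (D1 & D2 & D3).
  destruct G as (Hu & Hw & Hv & _).
  rewrite (Ex_ext _ _ _ (fun S => (indb (memb u S) * indb (memb v S)) * ((-1) * indb (memb w S) + 1)))
    by (intros; rewrite indb_ev; auto).
  rewrite (Ex_indep p _ _ _ [u; v] [w]).
  - rewrite (Ex_indep p _ _ _ [u] [v]).
    + rewrite Ex_plus, Ex_scal, Ex_const, !Ex_memb by (auto; apply NoDup_rays). ring.
    + apply dep_memb.
    + apply dep_memb.
    + intros x [<-|[]] [E|[]]; auto.
  - intros S S' E. rewrite (dep_memb u S S'), (dep_memb v S S'); auto;
      intros x [<-|[]]; apply E; simpl; auto.
  - apply dep_affine, dep_memb.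
  - intros x [<-|[<-|[]]] [E|[]]; subst; auto.
Qed.

Lemma cov0 p h k t t' : good h k t -> good h k t' -> mid t <> mid t' ->
  Ex p (rays_upto h) (fun S => (indb (ev t S) - p * p * (1 - p)) * (indb (ev t' S) - p * p * (1 - p))) = 0.
Proof.
  intros G G' Hne.
  destruct t as [[u w] v] eqn:Et, t' as [[u' w'] v'] eqn:Et'.
  rewrite (Ex_indep p _ _ _ [u; w; v] [u'; w'; v']).
  - rewrite Ex_minus, Ex_const, (Ex_ev p h k (u, w, v)) by auto. ring.
  - intros S S' E. rewrite (dep_ev (u, w, v) S S' E); auto.
  - intros S S' E. rewrite (dep_ev (u', w', v') S S' E); auto.
  - intros x Hx. exact (disjoint h k u w v u' w' v' G G' Hne x Hx).
Qed.

Lemma sq_rsum {X} (f : X -> R) L :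
  rsum f L * rsum f L = rsum (fun t => rsum (fun t' => f t * f t') L) L.
Proof.
  rewrite <- rsum_scal. apply rsum_ext; intros t _.
  rewrite Rmult_comm, <- rsum_scal. apply rsum_ext; intros; ring.
Qed.

Lemma rsum_diag {X} (g : X -> R) L t : NoDup L -> In t L ->
  (forall t', In t' L -> t' <> t -> g t' = 0) -> rsum g L = g t.
Proof.
  induction L as [|a L IH]; simpl; intros Hn Ht H; [destruct Ht|].
  inversion Hn; subst.
  destruct Ht as [<-|Ht].
  - rewrite (rsum_ext _ (fun _ => 0 * 0)).
    + rewrite rsum_scal; ring.
    + intros x Hx; rewrite H; auto; [ring| intros ->; auto].
  - rewrite H; [rewrite IH; auto; ring | auto | intros ->; auto].
Qed.

Lemma second_moment p h k T : 0 <= p <= 1 -> NoDup (map mid T) ->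
  (forall t, In t T -> good h k t) ->
  Ex p (rays_upto h) (fun S => rsum (fun t => indb (ev t S) - p * p * (1 - p)) T *
                               rsum (fun t => indb (ev t S) - p * p * (1 - p)) T)
  <= INR (length T).
Proof.
  intros Hp Hn HT. set (mu := p * p * (1 - p)).
  assert (Hmu : 0 <= mu <= 1) by (unfold mu; split; nra).
  rewrite (Ex_ext _ _ _ (fun S => rsum (fun t => rsum (fun t' =>
      (indb (ev t S) - mu) * (indb (ev t' S) - mu)) T) T)) by (intros; apply sq_rsum).
  rewrite Ex_rsum.
  rewrite <- rsum_one. apply rsum_le. intros t Ht.
  rewrite (Ex_rsum p (rays_upto h) (fun t' S => (indb (ev t S) - mu) * (indb (ev t' S) - mu)) T).
  rewrite (rsum_diag _ T t).
  - rewrite <- (Ex_const p (rays_upto h) 1). apply Ex_mono; auto.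
    intros S _. unfold indb; destruct (ev t S); nra.
  - eapply NoDup_map_inv; eauto.
  - auto.
  - intros t' Ht' Hne. apply (cov0 p h k t t'); auto.
    intros E; apply Hne. symmetry; eapply NoDup_map_eq; eauto.
Qed.

Lemma rsum_minus_const {X} (f : X -> R) c L : rsum (fun t => f t - c) L = rsum f L - INR (length L) * c.
Proof.
  induction L; cbn [rsum fold_right length]; [simpl; ring|].
  unfold rsum in *; rewrite IHL, S_INR; ring.
Qed.

Lemma delta_big h k T S M mu : (2 <= k)%Z -> (1 <= M)%nat ->
  (2 * h + 1 <= 16 * Z.to_nat k * M)%nat ->
  NoDup (map mid T) -> (forall t, In t T -> good h k t) ->
  incl S (rays_upto h) -> NoDup S -> 0 < mu ->
  INR M * INR M * mu <= 8 * rsum (fun t => indb (ev t S)) T ->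
  mu / (4096 * IZR k * IZR k) < delta k S.
Proof.
  intros Hk HM Hh Hn HT HS HnS Hmu HX.
  rewrite rsum_ind in HX.
  pose proof (count_sing h k T S Hn HT HS) as C1.
  set (cnt := length (filter (fun t => ev t S) T)) in *.
  set (sg := length (filter (fun c => Z.leb k (sing_index c)) (cones S))) in *.
  pose proof (cones_len h S HnS HS) as C2.
  pose proof (NoDup_incl_length HnS HS) as C3.
  pose proof (rays_len h) as C4.
  assert (C5 : (sg <= length (cones S))%nat) by apply filter_length_le.
  set (K := Z.to_nat k) in *.
  assert (HK : IZR k = INR K) by (rewrite INR_IZR_INZ; unfold K; rewrite Z2Nat.id; [reflexivity|lia]).
  assert (Hcs : (length (cones S) * 1 <= 256 * (K * K) * (M * M))%nat).
  { assert ((2*h+1)*(2*h+1) <= (16*K*M)*(16*K*M))%nat by (apply Nat.mul_le_mono; auto). nia. }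
  apply le_INR in Hcs. rewrite !mult_INR in Hcs.
  apply le_INR in C1.
  assert (HM1 : 1 <= INR M) by (apply (le_INR 1); auto).
  assert (HK2 : 2 <= INR K) by (rewrite <- HK; apply IZR_le; auto).
  assert (Pcnt : 0 < INR cnt).
  { assert (0 < INR M * INR M * mu) by (apply Rmult_lt_0_compat; nra). lra. }
  unfold delta. destruct (cones S) as [|c0 cs'] eqn:Ec.
  - exfalso. try rewrite Ec in C5. simpl in C5. assert (sg = 0%nat) by lia.
    rewrite H in C1. simpl in C1. lra.
  - fold sg. rewrite HK.
    set (L := INR (length (c0 :: cs'))) in *.
    replace (INR 256) with 256 in Hcs by (simpl; ring). replace (INR 1) with 1 in Hcs by (simpl; ring).
    assert (0 < L) by (unfold L; apply lt_0_INR; simpl; lia).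
    apply Rmult_lt_reg_r with (4096 * INR K * INR K * L).
    { assert (0 < INR K * INR K) by nra. nra. }
    field_simplify; [|lra|nra].
    assert (0 < INR K * INR K * (INR M * INR M) * mu) by (repeat apply Rmult_lt_0_compat; nra).
    nra.
Qed.

Lemma main_h (k : Z) (q : R) (h M : nat) : (2 <= k)%Z -> 0 < q < 1 -> (1 <= M)%nat ->
  (4 * Z.to_nat k * M <= h)%nat -> (h < 4 * Z.to_nat k * (M + 1))%nat ->
  prob_T h (1 - q) (fun S => gtb (delta k S)
     ((1 - q) * (1 - q) * (1 - (1 - q)) / (4096 * IZR k * IZR k)))
  >= 1 - 16 / (INR M * ((1 - q) * (1 - q) * (1 - (1 - q))) ^ 2).
Proof.
  intros Hk Hq HM H1 H2.
  set (p := 1 - q) in *. set (mu := p * p * (1 - p)).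
  assert (Hp : 0 <= p <= 1) by (unfold p; lra).
  assert (Hmu : 0 < mu) by (unfold mu, p; apply Rmult_lt_0_compat; [nra|lra]).
  set (K := Z.to_nat k) in *.
  assert (HKz : Z.of_nat K = k) by (unfold K; lia).
  destruct (build h k (Fam M)) as [T [HTm HT]].
  { intros w Hw. apply Fam_in in Hw as (A1 & A2 & A3). destruct w as [wx wy]; cbn [fst snd] in *.
    apply triple_exists; auto.
    assert (Z.of_nat (4 * K * M) <= Z.of_nat h)%Z by lia.
    rewrite !Nat2Z.inj_mul, HKz in H. nia. }
  assert (Hn : NoDup (map mid T)) by (rewrite HTm; apply Fam_NoDup).
  set (n := length T).
  assert (Hnc : INR M * INR M <= 4 * INR n).
  { unfold n. rewrite <- (length_map mid T), HTm, Fam_len. apply coprime_count. }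
  assert (HM1 : 1 <= INR M) by (apply (le_INR 1); auto).
  assert (Hn0 : 0 < INR n) by nra.
  set (X := fun S => rsum (fun t => indb (ev t S)) T).
  set (bad := fun S => if Rlt_dec (X S) (INR n * mu / 2) then true else false).
  set (c := mu / (4096 * IZR k * IZR k)).
  unfold prob_T, prob_incl. fold (Ex p (rays_upto h) (fun S => indb (gtb (delta k S) c))).
  assert (Step1 : Ex p (rays_upto h) (fun S => 1 - indb (bad S)) <=
                  Ex p (rays_upto h) (fun S => indb (gtb (delta k S) c))).
  { apply Ex_mono; auto. intros S HS. apply subsets_props in HS as [HS1 HS2].
    unfold bad; destruct (Rlt_dec (X S) (INR n * mu / 2)) as [Hb|Hb].
    - unfold indb at 1; pose proof (indb_nonneg (gtb (delta k S) c)); lra.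
    - assert (Hd : c < delta k S).
      { apply (delta_big h k T S M mu); auto.
        - nia.
        - apply HS2, NoDup_rays.
        - fold (X S). nra. }
      unfold gtb; destruct (Rlt_dec c (delta k S)); [unfold indb; lra|contradiction]. }
  assert (Step2 : Ex p (rays_upto h) (fun S => indb (bad S)) * ((INR n * mu / 2) * (INR n * mu / 2))
                  <= INR n).
  { rewrite Rmult_comm, <- Ex_scal.
    eapply Rle_trans; [|apply (second_moment p h k T); auto].
    apply Ex_mono; auto. intros S _.
    rewrite rsum_minus_const. fold (X S). fold n.
    unfold bad; destruct (Rlt_dec (X S) (INR n * mu / 2)) as [Hb|Hb]; unfold indb.
    - fold mu. assert (X S - INR n * mu < - (INR n * mu / 2)) by lra. assert (0 < INR n * mu / 2) by (apply Rdiv_lt_0_compat; [apply Rmult_lt_0_compat|]; lra). nra.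
    - fold mu. pose proof (Rle_0_sqr (X S - INR n * mu)). unfold Rsqr in *. lra. }
  rewrite Ex_minus, Ex_const in Step1.
  assert (Hb : Ex p (rays_upto h) (fun S => indb (bad S)) <= 16 / (INR M * mu ^ 2)).
  { set (B := Ex p (rays_upto h) (fun S => indb (bad S))) in *.
    assert (B * (INR n * INR n * mu * mu) <= 4 * INR n) by nra.
    assert (B * (INR n * mu * mu) <= 4) by nra.
    apply Rmult_le_reg_r with (INR M * mu ^ 2); [apply Rmult_lt_0_compat; nra|].
    field_simplify; [|nra].
    assert (0 <= B) by (unfold B; rewrite <- (Ex_const p (rays_upto h) 0); apply Ex_mono; auto;
                         intros; apply indb_nonneg).
    assert (B * (INR M * INR M * mu * mu) <= 16) by nra.
    nra. }
  change (Ex p (rays_upto h) (fun S => indb (gtb (delta k S) c)) >= 1 - 16 / (INR M * mu ^ 2)). lra.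
Qed.

Theorem theorem2 :
  forall (k : Z) (q : R), (1 < k)%Z -> 0 < q < 1 ->
  exists c : R, c > 0 /\
    forall eps : R, eps > 0 ->
      exists H : nat, forall h : nat, (H <= h)%nat ->
        prob_T h (1 - q) (fun S => gtb (delta k S) c) >= 1 - eps.
Proof.
  intros k q Hk Hq.
  set (mu := (1 - q) * (1 - q) * (1 - (1 - q))).
  assert (Hmu : 0 < mu) by (unfold mu; apply Rmult_lt_0_compat; [nra|lra]).
  assert (Hk0 : 0 < IZR k) by (apply IZR_lt; lia).
  exists (mu / (4096 * IZR k * IZR k)). split.
  { apply Rlt_gt, Rdiv_lt_0_compat; nra. }
  intros eps Heps.
  set (x := 16 / (eps * mu ^ 2)).
  assert (Hx : 0 < x) by (unfold x; apply Rdiv_lt_0_compat; [lra| apply Rmult_lt_0_compat; nra]).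
  destruct (archimed x) as [Hup _].
  set (M0 := (Z.to_nat (up x) + 1)%nat).
  set (K := Z.to_nat k).
  assert (HK : (1 <= K)%nat) by (unfold K; lia).
  exists (4 * K * M0)%nat. intros h Hh.
  set (M := (h / (4 * K))%nat).
  assert (H4K : (4 * K <> 0)%nat) by lia.
  assert (HM0 : (M0 <= M)%nat).
  { unfold M. rewrite <- (Nat.div_mul M0 (4 * K)) by auto.
    apply Nat.Div0.div_le_mono. lia. }
  assert (HM1 : (1 <= M)%nat) by (unfold M0 in HM0; lia).
  assert (A1 : (4 * K * M <= h)%nat) by (unfold M; apply Nat.Div0.mul_div_le).
  assert (A2 : (h < 4 * K * (M + 1))%nat).
  { unfold M. rewrite Nat.add_1_r. apply Nat.mul_succ_div_gt; auto. }
  pose proof (main_h k q h M ltac:(lia) Hq HM1 A1 A2) as Hmain. fold mu in Hmain.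
  assert (16 / (INR M * mu ^ 2) <= eps).
  { assert (HxM : x < INR M).
    { apply le_INR in HM0. unfold M0 in HM0. rewrite plus_INR, INR_IZR_INZ, Z2Nat.id in HM0.
      - simpl in HM0; lra.
      - apply le_IZR; lra. }
    assert (0 < mu ^ 2) by nra.
    unfold x in HxM.
    assert (0 < INR M) by (unfold x in Hx; lra).
    apply Rmult_le_reg_r with (INR M * mu ^ 2); [apply Rmult_lt_0_compat; lra|].
    field_simplify; [|nra].
    assert (16 / (eps * mu ^ 2) * (eps * mu ^ 2) = 16) by (field; nra).
    assert (16 / (eps * mu ^ 2) * (eps * mu ^ 2) < INR M * (eps * mu ^ 2)).
    { apply Rmult_lt_compat_r; [nra|lra]. }
    nra. }
  lra.
Qed.
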